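(* Let $M\ge 2$ and $d\ge 2$ be integers and put $m=M^{d-1}$. Consider all integer sequences of dilations $1=s_1\le s_2\le\cdots\le s_d=m$ such that $s_i=n_i s_{i-1}$ for some positive integer $n_i$, for each $i=2,\dots,d$ (i.e. each dilation divides the next). For each such sequence, let $\bar{\mathcal d}(s_1,\dots,s_d)$ be the mean recurrent length, with period $m$, of the $d$-layer dilated RNN graph with dilations $s_1,\dots,s_d$. Then among all such sequences, $\bar{\mathcal d}$ is minimized by the sequence $s_i=M^{i-1}$, $i=1,\dots,d$.
   Context: Dilated RNN graph with dilations $s_1,\dots,s_d$ (positive integers): the directed graph with vertex set $\{x_t: t\in\mathbb Z\}\cup\{c^{(l)}_t: t\in\mathbb Z,\ 1\le l\le d\}$ and edges $x_t\to c^{(1)}_t$, $c^{(l)}_t\to c^{(l+1)}_t$ for $1\le l<d$, and $c^{(l)}_t\to c^{(l)}_{t+s_l}$ for $1\le l\le d$ (these are all the edges; in particular there is no edge $c^{(l)}_t\to c^{(l)}_{t+1}$ unless $s_l=1$). The node $x_t$ is the input at time $t$ and $c^{(d)}_t$ is the output at time $t$. For $i\in\mathbb Z$ and $n\ge1$, $\mathcal d_i(n)$ denotes the number of edges of a shortest directed path from $x_i$ to $c^{(d)}_{i+n}$. The mean recurrent length with period $m$ is $\bar{\mathcal d}=\frac1m\sum_{n=1}^{m}\max_{i\in\mathbb Z}\mathcal d_i(n)$. *)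

(* Defs.v *)
From HB Require Import structures.
From mathcomp Require Import all_boot all_order all_algebra.
Set Implicit Arguments. Unset Strict Implicit. Unset Printing Implicit Defensive.
Import Order.TTheory GRing.Theory Num.Theory.

(* Vertices of the dilated RNN graph: x_t and c^(l)_t (t : int). *)
Inductive vtx : Type :=
| X : int -> vtx
| C : nat -> int -> vtx.

Inductive edge (d : nat) (s : nat -> nat) : vtx -> vtx -> Prop :=
| edge_in : forall t : int, edge d s (X t) (C 1 t)
| edge_up : forall (l : nat) (t : int), 1 <= l -> l < d ->
    edge d s (C l t) (C l.+1 t)
| edge_rec : forall (l : nat) (t : int), 1 <= l -> l <= d ->
    edge d s (C l t) (C l (t + (s l)%:Z)%R).

Inductive walk (d : nat) (s : nat -> nat) : vtx -> vtx -> nat -> Prop :=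
| walk_nil : forall v, walk d s v v 0
| walk_cons : forall u w v k, edge d s u w -> walk d s w v k ->
    walk d s u v k.+1.

Definition shortest_len (d : nat) (s : nat -> nat) (i : int) (n : nat) (k : nat) : Prop :=
  walk d s (X i) (C d (i + n%:Z)%R) k /\
  forall k', walk d s (X i) (C d (i + n%:Z)%R) k' -> k <= k'.

Definition max_dist (d : nat) (s : nat -> nat) (n : nat) (D : nat) : Prop :=
  (forall i : int, exists k, shortest_len d s i n k /\ k <= D) /\
  (exists i : int, shortest_len d s i n D).

Definition mean_len (m : nat) (D : nat -> nat) : rat :=
  ((\sum_(1 <= n < m.+1) D n)%:R / m%:R)%R.

Definition admissible (d m : nat) (s : nat -> nat) : Prop :=
  s 1 = 1 /\ s d = m /\
  (forall i, 2 <= i <= d -> s i.-1 <= s i /\ exists ni, 0 < ni /\ s i = ni * s i.-1).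

(* Main.v *)
Require Import Defs.
From mathcomp Require Import all_boot all_order all_algebra.
From mathcomp Require Import zify.
Import Order.TTheory GRing.Theory Num.Theory.

Fixpoint Gf (r : nat -> nat) (k l q : nat) : nat :=
  match k with
  | 0 => q
  | k'.+1 => q %% r l + Gf r k' l.+1 (q %/ r l)
  end.

Lemma Gf0 r k l : Gf r k l 0 = 0.
Proof. by elim: k l => [|k IH] l //=; rewrite mod0n div0n IH. Qed.

Lemma Gf_succ r k l q : (forall i, i < k -> 0 < r (l + i)) ->
  Gf r k l q.+1 <= (Gf r k l q).+1.
Proof.
elim: k l q => [|k IH] l q Hr //=.
have R0 : 0 < r l by have := Hr 0 isT; rewrite addn0.
have Hr' : forall i, i < k -> 0 < r (l.+1 + i).
  by move=> i Hi; rewrite addSnnS; apply: Hr.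
set R := r l in R0 *.
have [a [b [-> Hb]]] : exists a b, q = a * R + b /\ b < R.
  by exists (q %/ R), (q %% R); rewrite -divn_eq ltn_pmod.
rewrite -addnS !modnMDl !divnMDl // (modn_small Hb) (divn_small Hb) addn0.
case: (ltnP b.+1 R) => Hb2.
  by rewrite (modn_small Hb2) (divn_small Hb2) addn0 addSn.
have eR : b.+1 = R by apply/eqP; rewrite eqn_leq Hb Hb2.
rewrite eR modnn divnn R0 add0n addn1.
have := IH l.+1 a Hr'. lia.
Qed.

Lemma sumc n c : \sum_(i < n) c = n * c.
Proof. by elim: n => [|n IH]; rewrite ?big_ord0 // big_ord_recr /= IH mulSn addnC. Qed.

Lemma sum2 R : 2 * \sum_(b < R) b = R * R.-1.
Proof.
elim: R => [|R IH]; first by rewrite big_ord0.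
rewrite big_ord_recr /= mulnDr IH; case: R {IH} => //= R; lia.
Qed.

Lemma sum_split R P (f : nat -> nat) :
  \sum_(q < R * P) f q = \sum_(a < P) \sum_(b < R) f (a * R + b).
Proof.
elim: P => [|P IH]; first by rewrite muln0 !big_ord0.
rewrite mulnS addnC big_split_ord /= IH big_ord_recr /=.
congr (_ + _); apply: eq_bigr => i _ /=; by rewrite mulnC.
Qed.

Lemma Gf_sum r k l : (forall i, i < k -> 0 < r (l + i)) ->
  2 * \sum_(q < \prod_(i < k) r (l + i)) Gf r k l q =
  \prod_(i < k) r (l + i) * \sum_(i < k) (r (l + i)).-1.
Proof.
elim: k l => [|k IH] l Hr.
  by rewrite !big_ord0 big_ord_recr big_ord0 /=.
have R0 : 0 < r l by have := Hr 0 isT; rewrite addn0.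
have Hr' : forall i, i < k -> 0 < r (l.+1 + i).
  by move=> i Hi; rewrite addSnnS; apply: Hr.
rewrite !big_ord_recl /= addn0.
have E1 : \prod_(i < k) r (l + bump 0 i) = \prod_(i < k) r (l.+1 + i).
  by apply: eq_bigr => i _; rewrite /bump /= add1n addSnnS.
have E2 : \sum_(i < k) (r (l + bump 0 i)).-1 = \sum_(i < k) (r (l.+1 + i)).-1.
  by apply: eq_bigr => i _; rewrite /bump /= add1n addSnnS.
rewrite E1 E2 (sum_split _ _ (fun q => q %% r l + Gf r k l.+1 (q %/ r l))).
have E3 : \sum_(a < \prod_(i < k) r (l.+1 + i)) \sum_(b < r l)
     ((a * r l + b) %% r l + Gf r k l.+1 ((a * r l + b) %/ r l)) =
   \sum_(a < \prod_(i < k) r (l.+1 + i)) (\sum_(b < r l) b + r l * Gf r k l.+1 a).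
  apply: eq_bigr => a _; rewrite big_split /=; congr (_ + _).
    by apply: eq_bigr => b _; rewrite modnMDl modn_small.
  by rewrite -(sumc (r l)); apply: eq_bigr => b _; rewrite divnMDl // divn_small // addn0.
rewrite E3 big_split /= sumc -big_distrr /= mulnDr.
have H1 := IH _ Hr'. have H2 := sum2 (r l). move: H1 H2.
set P := \prod_(i < k) _. set S := \sum_(i < k) _.
set T := \sum_(i < P) _. set U := \sum_(b < r l) b. set R := r l. nia.
Qed.

Lemma Gf_top r k l : (forall i, i < k -> 0 < r (l + i)) ->
  Gf r k l (\prod_(i < k) r (l + i)) = 1.
Proof.
elim: k l => [|k IH] l Hr; first by rewrite big_ord0.
have R0 : 0 < r l by have := Hr 0 isT; rewrite addn0.
have Hr' : forall i, i < k -> 0 < r (l.+1 + i).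
  by move=> i Hi; rewrite addSnnS; apply: Hr.
rewrite big_ord_recl /= addn0.
have E1 : \prod_(i < k) r (l + bump 0 i) = \prod_(i < k) r (l.+1 + i).
  by apply: eq_bigr => i _; rewrite /bump /= add1n addSnnS.
by rewrite E1 mulnC modnMl mulnK // IH.
Qed.

Lemma walk_cat d s u w v k1 k2 : walk d s u w k1 -> walk d s w v k2 -> walk d s u v (k1 + k2).
Proof.
elim=> [x|u0 w0 v0 k E W IH] // W2.
by rewrite addSn; apply: walk_cons E (IH W2).
Qed.

Lemma walk_rep d s l t n : 1 <= l <= d ->
  walk d s (C l t) (C l (t + (n * s l)%:Z)%R) n.
Proof.
move=> /andP [H1 H2]; elim: n t => [|n IH] t.
  by rewrite mul0n addr0; apply: walk_nil.
apply: walk_cons (edge_rec _ _ H1 H2) _.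
have -> : (t + (n.+1 * s l)%:Z = t + (s l)%:Z + (n * s l)%:Z)%R.
  by rewrite mulSn PoszD addrA.
exact: IH.
Qed.

Lemma walk_up d s r k : forall l t q, d = l + k -> 1 <= l ->
  (forall j, 1 <= j < d -> s j.+1 = r j * s j) ->
  (forall j, 1 <= j < d -> 0 < r j) ->
  walk d s (C l t) (C d (t + (q * s l)%:Z)%R) (k + Gf r k l q).
Proof.
elim: k => [|k IH] l t q Hd Hl Hs Hr.
  rewrite addn0 in Hd; subst d; apply: walk_rep; by rewrite Hl leqnn.
have Hld : l < d by lia.
set R := r l.
have R0 : 0 < R by apply: Hr; lia.
have -> : k.+1 + Gf r k.+1 l q = q %% R + (k + Gf r k l.+1 (q %/ R)).+1.
  rewrite /= -/R. lia.
have W1 : walk d s (C l t) (C l (t + (q %% R * s l)%:Z)%R) (q %% R).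
  by apply: walk_rep; lia.
apply: walk_cat W1 _.
apply: walk_cons (edge_up _ _ Hl Hld) _.
have -> : (t + (q * s l)%:Z = t + (q %% R * s l)%:Z + (q %/ R * s l.+1)%:Z)%R.
  rewrite Hs; last by lia.
  rewrite -addrA -PoszD; congr (_ + Posz _)%R.
  rewrite {1}(divn_eq q R) -/R. nia.
apply: IH => //; lia.
Qed.

Lemma walk_lb d s r u v w : walk d s u v w ->
  forall l t t', u = C l t -> v = C d t' -> 1 <= l <= d ->
  (forall j, 1 <= j < d -> s j.+1 = r j * s j) ->
  (forall j, 1 <= j < d -> 0 < r j) ->
  exists q, t' = (t + (q * s l)%:Z)%R /\ d - l + Gf r (d - l) l q <= w.
Proof.
elim=> [v0 | u0 w0 v0 k E W IH] l t t' Hu Hv Hl Hs Hr.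
  rewrite Hu in Hv; case: Hv => -> ->.
  by exists 0; rewrite mul0n addr0 subnn.
subst u0 v0; inversion E; subst.
-
  have [q [Ht Hk]] := IH l.+1 t t' erefl erefl ltac:(lia) Hs Hr.
  have R0 : 0 < r l by apply: Hr; lia.
  exists (q * r l); split.
    by rewrite Ht Hs ?mulnA //; lia.
  by rewrite -(subnSK H3) /= modnMl mulnK // add0n.
-
  have [q [Ht Hk]] := IH l (t + (s l)%:Z)%R t' erefl erefl Hl Hs Hr.
  exists q.+1; split.
    by rewrite Ht mulSn PoszD addrA.
  have := Gf_succ r (d - l) l q (fun i Hi => Hr (l + i) ltac:(lia)). lia.
Qed.
Lemma amgm k (E : nat -> nat) M : \prod_(i < k) E i = M ^ k -> k * M <= \sum_(i < k) E i.
Proof.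
move=> HP; case: k HP => [|k] HP; first by rewrite mul0n.
have [H _] := @leif_AGM rat _ predT (fun i : 'I_k.+1 => ((E i)%:R)%R) (fun i _ => ler0n _ _).
move: H; rewrite cardT size_enum_ord -natr_prod -natr_sum.
have -> : \prod_(i in (predT : pred 'I_k.+1)) E i = \prod_(i < k.+1) E i by apply: eq_bigl.
have -> : \sum_(i in (predT : pred 'I_k.+1)) E i = \sum_(i < k.+1) E i by apply: eq_bigl.
rewrite HP natrX (ler_pXn2r (R:=rat)) // ?rpred_div ?nnegrE ?ler0n //.
by rewrite ler_pdivlMr ?ltr0n // -natrM ler_nat mulnC.
Qed.

Definition rr (s : nat -> nat) (j : nat) := s j.+1 %/ s j.

Lemma adm_facts d m s : admissible d m s ->
  (forall j, 1 <= j <= d -> 0 < s j) /\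
  (forall j, 1 <= j < d -> s j.+1 = rr s j * s j) /\
  (forall j, 1 <= j < d -> 0 < rr s j).
Proof.
move=> [s1 [sd Hi]].
have Hp : forall j, 1 <= j <= d -> 0 < s j.
  elim=> [|j IH] // Hj.
  case: j IH Hj => [|j] IH Hj; first by rewrite s1.
  have [_ [ni [Hn ->]]] := Hi j.+2 ltac:(lia).
  rewrite muln_gt0 Hn IH //; lia.
have Hrr : forall j, 1 <= j < d -> s j.+1 = rr s j * s j /\ 0 < rr s j.
  move=> j Hj; have [_ [ni [Hn E]]] := Hi j.+1 ltac:(lia).
  rewrite /rr /= in E *; rewrite E mulnK ?Hn //; apply: Hp; lia.
split=> //; split=> j Hj; by case: (Hrr j Hj).
Qed.

Lemma dist_lb d s r (hd : 1 <= d)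
  (Hs : forall j, 1 <= j < d -> s j.+1 = r j * s j)
  (Hr : forall j, 1 <= j < d -> 0 < r j) (s1 : s 1 = 1) i n w :
  walk d s (X i) (C d (i + n%:Z)%R) w -> d + Gf r (d - 1) 1 n <= w.
Proof.
move=> W; inversion W; subst.
inversion H; subst.
have [q [Ht Hk]] := walk_lb d s r _ _ _ H0 1 i (i + n%:Z)%R erefl erefl ltac:(lia) Hs Hr.
rewrite s1 muln1 in Ht.
have Eq : n = q by move: Ht => /addrI [].
subst q; lia.
Qed.

Lemma dist_ub d s r (hd : 1 <= d)
  (Hs : forall j, 1 <= j < d -> s j.+1 = r j * s j)
  (Hr : forall j, 1 <= j < d -> 0 < r j) (s1 : s 1 = 1) i n :
  walk d s (X i) (C d (i + n%:Z)%R) (d + Gf r (d - 1) 1 n).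
Proof.
have -> : d + Gf r (d - 1) 1 n = (d - 1 + Gf r (d - 1) 1 n).+1 by lia.
apply: walk_cons (edge_in _ _ _) _.
have := walk_up d s r (d - 1) 1 i n ltac:(lia) (leqnn 1) Hs Hr.
by rewrite s1 muln1.
Qed.

Lemma D_exact d m s D (hd : 1 <= d) : admissible d m s ->
  forall n, max_dist d s n D -> D = d + Gf (rr s) (d - 1) 1 n.
Proof.
move=> Ha n [_ [i [W Hmin]]].
have [Hp [Hs Hr]] := adm_facts _ _ _ Ha.
have s1 : s 1 = 1 by case: Ha.
apply/eqP; rewrite eqn_leq; apply/andP; split.
  exact: Hmin (dist_ub _ _ _ hd Hs Hr s1 i n).
exact: (dist_lb _ _ _ hd Hs Hr s1 _ _ _ W).
Qed.

Lemma max_dist_ok d m s (hd : 1 <= d) : admissible d m s ->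
  forall n, max_dist d s n (d + Gf (rr s) (d - 1) 1 n).
Proof.
move=> Ha n.
have [Hp [Hs Hr]] := adm_facts _ _ _ Ha.
have s1 : s 1 = 1 by case: Ha.
have SL : forall i, shortest_len d s i n (d + Gf (rr s) (d - 1) 1 n).
  move=> i; split; first exact: dist_ub.
  move=> k' W; exact: (dist_lb _ _ _ hd Hs Hr s1 _ _ _ W).
split; last by exists 0%R.
by move=> i; exists (d + Gf (rr s) (d - 1) 1 n); split.
Qed.

Lemma prod_formula d m s : 1 <= d -> admissible d m s ->
  m = \prod_(i < d - 1) rr s (1 + i).
Proof.
move=> hd Ha; have [Hp [Hs Hr]] := adm_facts _ _ _ Ha.
have [s1 [sd _]] := Ha.
have H : forall k, k <= d - 1 -> s (1 + k) = \prod_(i < k) rr s (1 + i).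
  elim=> [|k IH] Hk; first by rewrite big_ord0 addn0.
  rewrite big_ord_recr /= -IH; last by lia.
  rewrite addnS Hs; last by lia.
  by rewrite mulnC.
rewrite -sd -H //; congr s; lia.
Qed.

Lemma sum_formula d m s : 1 <= d -> admissible d m s ->
  2 * \sum_(1 <= n < m.+1) (d + Gf (rr s) (d - 1) 1 n) =
  2 * m * d + m * \sum_(i < d - 1) (rr s (1 + i)).-1 + 2.
Proof.
move=> hd Ha; have [Hp [Hs Hr]] := adm_facts _ _ _ Ha.
have HP := prod_formula _ _ _ hd Ha.
have Hr' : forall i, i < d - 1 -> 0 < rr s (1 + i) by move=> i Hi; apply: Hr; lia.
have HS := Gf_sum (rr s) (d - 1) 1 Hr'.
have HT := Gf_top (rr s) (d - 1) 1 Hr'.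
rewrite -HP in HS HT.
have m0 : 0 < m.
  by rewrite HP prodn_gt0 // => i; apply: Hr'.
rewrite big_nat_recr //=.
have E0 : \sum_(0 <= n < m) (d + Gf (rr s) (d - 1) 1 n) =
   (d + Gf (rr s) (d - 1) 1 0) + \sum_(1 <= n < m) (d + Gf (rr s) (d - 1) 1 n).
  by rewrite big_ltn.
rewrite big_mkord big_split /= sumc Gf0 in E0.
rewrite HT. move: E0 HS.
set A := \sum_(1 <= n < m) _. set B := \sum_(i < m) _. set S := \sum_(i < d - 1) _.
rewrite -mulnA; move: (m * d) (m * S) => X Y; lia.
Qed.

Lemma predsum k (E : nat -> nat) : (forall i, i < k -> 0 < E i) ->
  \sum_(i < k) (E i).-1 + k = \sum_(i < k) E i.
Proof.
elim: k => [|k IH] H; first by rewrite !big_ord0.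
rewrite !big_ord_recr /= -IH; last by move=> i Hi; apply: H; lia.
have Hk := H k (ltnSn k).
rewrite -[in RHS](prednK Hk) -!addnA; congr (_ + _); lia.
Qed.

Theorem theorem1 (M d : nat) (hM : 2 <= M) (hd : 2 <= d) :
  let m := M ^ d.-1 in
  let sstar := fun i : nat => M ^ i.-1 in
  admissible d m sstar /\
  (* the mean recurrent length is well defined for every admissible sequence *)
  (forall s, admissible d m s ->
     exists D : nat -> nat, forall n, 1 <= n <= m -> max_dist d s n (D n)) /\
  (* and it is minimized by sstar *)
  (forall s (D Dstar : nat -> nat), admissible d m s ->
     (forall n, 1 <= n <= m -> max_dist d s n (D n)) ->
     (forall n, 1 <= n <= m -> max_dist d sstar n (Dstar n)) ->
     (mean_len m Dstar <= mean_len m D)%R).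
Proof.
move=> m sstar.
have hd1 : 1 <= d by lia.
have M0 : 0 < M by lia.
have Hadm : admissible d m sstar.
  rewrite /admissible /sstar /m; split; first by [].
  split; first by [].
  move=> i Hi; split.
    by apply: leq_pexp2l => //; lia.
  exists M; split => //.
  case: i Hi => [|[|i]] Hi //=. by rewrite expnS.
split => //.
split.
  move=> s Ha; exists (fun n => d + Gf (rr s) (d - 1) 1 n) => n _.
  exact: (max_dist_ok _ _ _ hd1 Ha n).
move=> s D Dstar Ha HD HDs.
have ED : \sum_(1 <= n < m.+1) D n = \sum_(1 <= n < m.+1) (d + Gf (rr s) (d - 1) 1 n).
  by apply: eq_big_nat => n Hn; exact: D_exact _ _ _ _ hd1 Ha n (HD n Hn).
have EDs : \sum_(1 <= n < m.+1) Dstar n =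
    \sum_(1 <= n < m.+1) (d + Gf (rr sstar) (d - 1) 1 n).
  by apply: eq_big_nat => n Hn; exact: D_exact _ _ _ _ hd1 Hadm n (HDs n Hn).
have F1 := sum_formula _ _ _ hd1 Ha.
have F2 := sum_formula _ _ _ hd1 Hadm.
have rrs : forall i, rr sstar (1 + i) = M.
  by move=> i; rewrite /rr /sstar add1n /= expnS mulnK // expn_gt0 M0.
have Sstar : \sum_(i < d - 1) (rr sstar (1 + i)).-1 = (d - 1) * M.-1.
  by rewrite -sumc; apply: eq_bigr => i _; rewrite rrs.
have Ss : (d - 1) * M.-1 <= \sum_(i < d - 1) (rr s (1 + i)).-1.
  have HP := prod_formula _ _ _ hd1 Ha.
  have [_ [_ Hr]] := adm_facts _ _ _ Ha.
  have Hr' : forall i, i < d - 1 -> 0 < rr s (1 + i) by move=> i Hi; apply: Hr; lia.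
  have H1 := amgm (d - 1) (fun i => rr s (1 + i)) M.
  rewrite -HP /m subn1 in H1; have {}H1 := H1 erefl.
  have H2 := predsum (d - 1) (fun i => rr s (1 + i)) Hr'.
  have H3 : (d - 1) * M.-1 + (d - 1) = (d - 1) * M by rewrite -mulnSr prednK.
  move: H1 H2 H3; rewrite subn1.
  move: ((d.-1) * M.-1) ((d.-1) * M) (\sum_(i < d.-1) _) (\sum_(i < d.-1) _) => a b c e.
  lia.
rewrite /mean_len; apply: ler_wpM2r; first by rewrite invr_ge0 ler0n.
rewrite ler_nat EDs ED -(leq_pmul2l (_ : 0 < 2)) // F1 F2 Sstar.
by rewrite leq_add2r leq_add2l leq_mul2l Ss orbT.
Qed.
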